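(* Let $\mathbf{X}\subseteq\mathbb{R}_+^n$ be an interval and let $\mathrm{IC}(\mathbf{a}_0,\dots,\mathbf{a}_{n-1})$ be an interval circulant matrix containing $\hat A$. Then $\mathrm{IC}(\mathbf{a}_0,\dots,\mathbf{a}_{n-1})$ is possibly $\mathbf{X}$-robust, i.e. there exists $A\in\mathrm{IC}(\mathbf{a}_0,\dots,\mathbf{a}_{n-1})$ with $x\in\mathrm{Attr}(A)$ for all $x\in\mathbf{X}$, if and only if $x^{(i)}\in\mathrm{Attr}(\hat A)$ for all $i\in\{1,\dots,n\}$.
   Context: Max algebra on $\mathbb{R}_+$: $\oplus=\max$, ordinary product, $A^t$ max-algebraic power; $\lambda(A)$ greatest max-algebraic eigenvalue (maximum cycle geometric mean); $\mathrm{Attr}(A)=\{x\in\mathbb{R}_+^n: A^{t+1}\otimes x=\lambda(A)A^t\otimes x\text{ for some } t\ge0\}$. An interval $\mathbf{X}=\prod_i\mathbf{X}_i$ has each $\mathbf{X}_i\subseteq\mathbb{R}_+$ nonempty of one of the forms $[\underline{x}_i,\overline{x}_i]$, $(\underline{x}_i,\overline{x}_i)$, $(\underline{x}_i,\overline{x}_i]$, $[\underline{x}_i,\overline{x}_i)$; $x^{(k)}=(\underline{x}_1,\dots,\underline{x}_{k-1},\overline{x}_k,\underline{x}_{k+1},\dots,\underline{x}_n)$. $\mathrm{Circ}(a_0,\dots,a_{n-1})$ has entries $A_{i,j}=a_t$, $t\equiv j-i\pmod n$, $t\in\{0,..,n-1\}$; the interval circulant matrix $\mathrm{IC}(\mathbf{a}_0,\dots,\mathbf{a}_{n-1})$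 is the set of all $\mathrm{Circ}(a_0,\dots,a_{n-1})$ with $a_t\in\mathbf{a}_t$, each $\mathbf{a}_t\subseteq\mathbb{R}_+$ a nonempty interval of one of the four forms with endpoints $\underline a_t\le\overline a_t$. $\underline a=\max_k\underline a_k$, $\hat A=\mathrm{Circ}(\hat a_0,\dots,\hat a_{n-1})$ with $\hat a_i=\min\{\underline a,\overline a_i\}$. *)

(* Defs.v *)
(* Indices are natural numbers 0..n-1; vectors are nat -> R, matrices nat -> nat -> R;
   only indices < n are ever inspected. *)
From Stdlib Require Import Reals List Arith ListDec.
Import ListNotations.
Open Scope R_scope.

(* max-algebraic sum over indices 0..n-1 (0 is the neutral element on R_+) *)
Definition maxl (n : nat) (f : nat -> R) : R :=
  fold_right Rmax 0 (map f (seq 0 n)).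

Definition mmul (n : nat) (A B : nat -> nat -> R) : nat -> nat -> R :=
  fun i j => maxl n (fun k => A i k * B k j).
Definition mvec (n : nat) (A : nat -> nat -> R) (x : nat -> R) : nat -> R :=
  fun i => maxl n (fun j => A i j * x j).
Definition mid : nat -> nat -> R := fun i j => if Nat.eq_dec i j then 1 else 0.
Fixpoint mpow (n : nat) (A : nat -> nat -> R) (t : nat) : nat -> nat -> R :=
  match t with
  | O => mid
  | S t' => mmul n A (mpow n A t')
  end.

Fixpoint idx_lists (n k : nat) : list (list nat) :=
  match k with
  | O => [[]]
  | S k' => flat_map (fun i => map (cons i) (idx_lists n k')) (seq 0 n)
  end.

Fixpoint walkw (A : nat -> nat -> R) (i : nat) (l : list nat) (j : nat) : R :=
  match l with
  | [] => A i j
  | h :: t => A i h * walkw A h t j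
  end.

Definition kroot (k : nat) (w : R) : R :=
  if Rle_dec w 0 then 0 else Rpower w (/ INR k).

(* geometric mean of the elementary cycle (i0 i1 ... i_{k-1} i0); 0 for non-cycles *)
Definition cycle_gmean (A : nat -> nat -> R) (c : list nat) : R :=
  match c with
  | [] => 0
  | i0 :: rest =>
      if NoDup_dec Nat.eq_dec c then kroot (length c) (walkw A i0 rest i0) else 0
  end.

Definition lambda (n : nat) (A : nat -> nat -> R) : R :=
  fold_right Rmax 0
    (map (cycle_gmean A) (flat_map (fun k => idx_lists n k) (seq 1 n))).

Definition Attr (n : nat) (A : nat -> nat -> R) (x : nat -> R) : Prop :=
  (forall i, (i < n)%nat -> 0 <= x i) /\
  exists t : nat, forall i, (i < n)%nat ->
    mvec n (mpow n A (S t)) x i = lambda n A * mvec n (mpow n A t) x i.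

Record ival := Ival { lo : R; hi : R; lo_closed : bool; hi_closed : bool }.

Definition in_ival (I : ival) (v : R) : Prop :=
  (if lo_closed I then lo I <= v else lo I < v) /\
  (if hi_closed I then v <= hi I else v < hi I).

Definition wf_ival (I : ival) : Prop :=
  0 <= lo I /\ lo I <= hi I /\ exists v, in_ival I v.

Definition Circ (n : nat) (a : nat -> R) : nat -> nat -> R :=
  fun i j => a ((j + n - i) mod n)%nat.

Definition lo_max (n : nat) (ia : nat -> ival) : R := maxl n (fun k => lo (ia k)).
Definition hat_a (n : nat) (ia : nat -> ival) : nat -> R :=
  fun i => Rmin (lo_max n ia) (hi (ia i)).
Definition hatA (n : nat) (ia : nat -> ival) : nat -> nat -> R := Circ n (hat_a n ia).

(* x^(k) = (lower_1,...,lower_{k-1}, upper_k, lower_{k+1},...) (0-based k) *)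
Definition xk (X : nat -> ival) (k : nat) : nat -> R :=
  fun i => if Nat.eq_dec i k then hi (X i) else lo (X i).

Definition possibly_robust (n : nat) (ia X : nat -> ival) : Prop :=
  exists a : nat -> R,
    (forall t, (t < n)%nat -> in_ival (ia t) (a t)) /\
    forall x : nat -> R, (forall i, (i < n)%nat -> in_ival (X i) (x i)) ->
      Attr n (Circ n a) x.

(* Main.v *)
Require Import Defs.
From Stdlib Require Import Reals Lra Lia List Arith Wf_nat Permutation ListDec Classical.
Import ListNotations.
Open Scope R_scope.

Definition lmax (l : list R) : R := fold_right Rmax 0 l.

Lemma lmax_ge0 l : 0 <= lmax l.
Proof. induction l; simpl; [lra|]. apply Rle_trans with (lmax l); auto. apply Rmax_r. Qed.

Lemma lmax_In l r : In r l -> r <= lmax l.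
Proof.
  induction l; simpl; [tauto|]. intros [->|H].
  - apply Rmax_l.
  - apply Rle_trans with (lmax l); auto. apply Rmax_r.
Qed.

Lemma lmax_le l b : 0 <= b -> (forall r, In r l -> r <= b) -> lmax l <= b.
Proof.
  intros Hb H; induction l; simpl; auto.
  apply Rmax_lub; auto. apply H; simpl; auto. apply IHl; intros; apply H; simpl; auto.
Qed.

Lemma lmax_att l : lmax l = 0 \/ In (lmax l) l.
Proof.
  induction l; simpl; auto. fold (lmax l).
  destruct (Rle_dec a (lmax l)).
  - rewrite Rmax_right by auto. destruct IHl as [H|H]; [left|right]; auto.
  - rewrite Rmax_left by lra. right; auto.
Qed.

Lemma maxl_ge0 n f : 0 <= maxl n f.
Proof. apply lmax_ge0. Qed.

Lemma maxl_ge n f k : (k < n)%nat -> f k <= maxl n f.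
Proof. intros. apply lmax_In. apply in_map. apply in_seq. lia. Qed.

Lemma maxl_le n f b : 0 <= b -> (forall k, (k < n)%nat -> f k <= b) -> maxl n f <= b.
Proof.
  intros Hb H. apply lmax_le; auto. intros r Hr. apply in_map_iff in Hr.
  destruct Hr as [k [<- Hk]]. apply in_seq in Hk. apply H. lia.
Qed.

Lemma maxl_att n f : maxl n f = 0 \/ exists k, (k < n)%nat /\ maxl n f = f k.
Proof.
  destruct (lmax_att (map f (seq 0 n))) as [H|H]; [left; exact H|right].
  apply in_map_iff in H. destruct H as [k [H1 H2]]. apply in_seq in H2.
  exists k; split; [lia|]. rewrite H1. reflexivity.
Qed.

Lemma maxl_ext n f g : (forall k, (k < n)%nat -> f k = g k) -> maxl n f = maxl n g.
Proof.
  intros H. unfold maxl. f_equal. apply map_ext_in. intros k Hk. apply in_seq in Hk. apply H. lia.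
Qed.

Lemma maxl_mono n f g : (forall k, (k < n)%nat -> f k <= g k) -> maxl n f <= maxl n g.
Proof.
  intros H. apply maxl_le; [apply maxl_ge0|]. intros k Hk.
  apply Rle_trans with (g k); auto. apply maxl_ge; auto.
Qed.

Lemma idx_lists_iff n t l : In l (idx_lists n t) <-> length l = t /\ (forall s, In s l -> (s < n)%nat).
Proof.
  revert l; induction t; intros l; simpl.
  - split.
    + intros [<-|[]]. split; simpl; auto. intros s [].
    + intros [H _]. destruct l; simpl in H; try discriminate. auto.
  - rewrite in_flat_map. split.
    + intros [i [Hi Hl]]. apply in_map_iff in Hl. destruct Hl as [l' [<- Hl']].
      apply IHt in Hl'. apply in_seq in Hi. destruct Hl' as [H1 H2].
      simpl; split; [lia|]. intros s [<-|Hs]; [lia|auto].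
    + intros [H1 H2]. destruct l as [|i l']; simpl in H1; [discriminate|].
      exists i; split. apply in_seq. specialize (H2 i (or_introl eq_refl)). lia.
      apply in_map. apply IHt. split; [lia|]. intros s Hs; apply H2; simpl; auto.
Qed.

Lemma Lsub n i c j : (0 < n)%nat -> (i < n)%nat -> (c < n)%nat -> j = ((i + c) mod n)%nat ->
  ((j + n - i) mod n)%nat = c.
Proof.
  intros Hn Hi Hc Hj. destruct (lt_dec (i + c) n).
  - rewrite Nat.mod_small in Hj by lia. subst.
    replace (i + c + n - i)%nat with (c + 1 * n)%nat by lia.
    rewrite Nat.Div0.mod_add. apply Nat.mod_small; auto.
  - subst j. assert (Hj' : ((i + c) mod n = i + c - n)%nat).
    { symmetry. apply Nat.mod_unique with 1%nat; lia. }
    rewrite Hj'. replace (i + c - n + n - i)%nat with c by lia. apply Nat.mod_small; auto.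
Qed.

Lemma M1a n i j : (i < n)%nat -> (j < n)%nat -> ((i + (j + n - i) mod n) mod n)%nat = j.
Proof.
  intros Hi Hj. rewrite Nat.Div0.add_mod_idemp_r.
  replace (i + (j + n - i))%nat with (j + 1 * n)%nat by lia.
  rewrite Nat.Div0.mod_add. apply Nat.mod_small; auto.
Qed.

Lemma mod_lt n a : (0 < n)%nat -> (a mod n < n)%nat.
Proof. intros. apply Nat.mod_upper_bound. lia. Qed.

Lemma mod_shift1 n j k c : (((j + k * c) mod n + c) mod n = (j + S k * c) mod n)%nat.
Proof.
  rewrite Nat.Div0.add_mod_idemp_l. f_equal. simpl. lia.
Qed.

Lemma mod_zero_diff n x y : (0 < n)%nat -> ((x + y) mod n = x mod n)%nat -> (y mod n = 0)%nat.
Proof.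
  intros Hn H. rewrite Nat.Div0.add_mod in H.
  pose proof (mod_lt n x Hn). pose proof (mod_lt n y Hn).
  destruct (lt_dec (x mod n + y mod n) n).
  - rewrite Nat.mod_small in H by lia. lia.
  - assert (E : ((x mod n + y mod n) mod n = x mod n + y mod n - n)%nat).
    { symmetry. apply Nat.mod_unique with 1%nat; lia. }
    lia.
Qed.

Definition suml (l : list nat) : nat := fold_right Nat.add 0%nat l.
Definition prodw (a : nat -> R) (l : list nat) : R := fold_right (fun s p => a s * p) 1 l.
Definition Fv (n : nat) (a : nat -> R) (t : nat) (x : nat -> R) (i : nat) : R :=
  lmax (map (fun l => prodw a l * x ((i + suml l) mod n)%nat) (idx_lists n t)).

Definition valid (n t : nat) (l : list nat) : Prop :=
  length l = t /\ (forall s, In s l -> (s < n)%nat).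

Definition nnv (n : nat) (x : nat -> R) : Prop := forall i, (i < n)%nat -> 0 <= x i.

Lemma Fv_ge0 n a t x i : 0 <= Fv n a t x i.
Proof. apply lmax_ge0. Qed.

Lemma Fv_ge n a t x i l : valid n t l -> prodw a l * x ((i + suml l) mod n)%nat <= Fv n a t x i.
Proof.
  intros Hv. apply lmax_In. apply in_map_iff. exists l; split; auto. apply idx_lists_iff. exact Hv.
Qed.

Lemma Fv_le n a t x i b : 0 <= b ->
  (forall l, valid n t l -> prodw a l * x ((i + suml l) mod n)%nat <= b) -> Fv n a t x i <= b.
Proof.
  intros Hb H. apply lmax_le; auto. intros r Hr. apply in_map_iff in Hr.
  destruct Hr as [l [<- Hl]]. apply H. apply idx_lists_iff. exact Hl.
Qed.

Lemma Fv_att n a t x i : Fv n a t x i = 0 \/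
  exists l, valid n t l /\ Fv n a t x i = prodw a l * x ((i + suml l) mod n)%nat.
Proof.
  destruct (lmax_att (map (fun l => prodw a l * x ((i + suml l) mod n)%nat) (idx_lists n t))) as [H|H].
  - left; exact H.
  - right. apply in_map_iff in H. destruct H as [l [H1 H2]]. exists l; split.
    + apply idx_lists_iff; exact H2.
    + unfold Fv. rewrite <- H1. reflexivity.
Qed.

Lemma prodw_ge0 n a l : nnv n a -> (forall s, In s l -> (s < n)%nat) -> 0 <= prodw a l.
Proof.
  intros Ha Hl. induction l; simpl; [lra|].
  apply Rmult_le_pos. apply Ha, Hl; simpl; auto. apply IHl. intros; apply Hl; simpl; auto.
Qed.

Lemma prodw_le n a l L : nnv n a -> (forall s, (s < n)%nat -> a s <= L) ->
  (forall s, In s l -> (s < n)%nat) -> prodw a l <= L ^ length l.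
Proof.
  intros Ha HL Hl. induction l; simpl; [lra|].
  assert (Hs : (a0 < n)%nat) by (apply Hl; simpl; auto).
  assert (IH : prodw a l <= L ^ length l) by (apply IHl; intros; apply Hl; simpl; auto).
  apply Rmult_le_compat; auto. apply prodw_ge0 with n; auto. intros; apply Hl; simpl; auto.
Qed.

Lemma Fv_ext n a t x y i : (0 < n)%nat -> (forall j, (j < n)%nat -> x j = y j) -> Fv n a t x i = Fv n a t y i.
Proof.
  intros Hn H. unfold Fv. f_equal. apply map_ext. intros l. rewrite H; auto. apply mod_lt; auto.
Qed.

Lemma Fv_rec n a t x i : (0 < n)%nat -> nnv n a ->
  Fv n a (S t) x i = maxl n (fun s => a s * Fv n a t x ((i + s) mod n)%nat).
Proof.
  intros Hn Ha. apply Rle_antisym.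
  - apply Fv_le; [apply maxl_ge0|]. intros l [Hlen Hl].
    destruct l as [|s l']; simpl in Hlen; [discriminate|].
    assert (Hs : (s < n)%nat) by (apply Hl; simpl; auto).
    apply Rle_trans with (a s * Fv n a t x ((i + s) mod n)%nat).
    + simpl. rewrite Rmult_assoc. apply Rmult_le_compat_l; [apply Ha; auto|].
      replace ((i + (s + suml l')) mod n)%nat with (((i + s) mod n + suml l') mod n)%nat.
      * apply Fv_ge. split; [lia|]. intros; apply Hl; simpl; auto.
      * rewrite Nat.Div0.add_mod_idemp_l. f_equal. lia.
    + apply (maxl_ge n (fun s => a s * Fv n a t x ((i + s) mod n)%nat)). auto.
  - apply maxl_le; [apply Fv_ge0|]. intros s Hs.
    destruct (Fv_att n a t x ((i + s) mod n)%nat) as [H|[l' [Hv H]]].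
    + rewrite H, Rmult_0_r. apply Fv_ge0.
    + rewrite H. rewrite <- Rmult_assoc.
      replace ((((i + s) mod n) + suml l') mod n)%nat with ((i + suml (s :: l')) mod n)%nat.
      * apply (Fv_ge n a (S t) x i (s :: l')). destruct Hv as [H1 H2]. split; simpl; [lia|].
        intros s' [<-|Hs']; auto.
      * rewrite Nat.Div0.add_mod_idemp_l. f_equal. simpl. lia.
Qed.

Lemma Fv_0 n a x i : (i < n)%nat -> 0 <= x i -> Fv n a 0 x i = x i.
Proof.
  intros Hi Hx. unfold Fv. simpl. rewrite Nat.add_0_r, Nat.mod_small by auto.
  rewrite Rmult_1_l. apply Rmax_left. auto.
Qed.

Lemma mvec_Circ n a v i : (0 < n)%nat -> (i < n)%nat ->
  mvec n (Circ n a) v i = maxl n (fun s => a s * v ((i + s) mod n)%nat).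
Proof.
  intros Hn Hi. unfold mvec, Circ. apply Rle_antisym.
  - apply maxl_le; [apply maxl_ge0|]. intros j Hj.
    set (s := ((j + n - i) mod n)%nat).
    assert (Hs : (s < n)%nat) by (apply mod_lt; auto).
    assert (E : ((i + s) mod n)%nat = j) by (apply M1a; auto).
    apply Rle_trans with (a s * v ((i + s) mod n)%nat).
    + rewrite E. apply Rle_refl.
    + apply (maxl_ge n (fun s => a s * v ((i + s) mod n)%nat)); auto.
  - apply maxl_le; [apply maxl_ge0|]. intros s Hs.
    set (j := ((i + s) mod n)%nat).
    assert (Hj : (j < n)%nat) by (apply mod_lt; auto).
    assert (E : ((j + n - i) mod n)%nat = s) by (apply Lsub; auto).
    apply Rle_trans with (a ((j + n - i) mod n)%nat * v j).
    + rewrite E. apply Rle_refl.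
    + apply (maxl_ge n (fun j => a ((j + n - i) mod n)%nat * v j)); auto.
Qed.

Lemma mvec_mmul n A B x i : (forall k, (k < n)%nat -> 0 <= A i k) -> nnv n x ->
  mvec n (mmul n A B) x i = mvec n A (mvec n B x) i.
Proof.
  intros HA Hx. unfold mvec, mmul. apply Rle_antisym.
  - apply maxl_le; [apply maxl_ge0|]. intros j Hj.
    destruct (maxl_att n (fun k => A i k * B k j)) as [H|[k [Hk H]]].
    + rewrite H, Rmult_0_l. apply maxl_ge0.
    + rewrite H. rewrite Rmult_assoc.
      apply Rle_trans with (A i k * maxl n (fun j => B k j * x j)).
      * apply Rmult_le_compat_l; auto. apply (maxl_ge n (fun j => B k j * x j)); auto.
      * apply (maxl_ge n (fun k => A i k * maxl n (fun j => B k j * x j))); auto.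
  - apply maxl_le; [apply maxl_ge0|]. intros k Hk.
    destruct (maxl_att n (fun j => B k j * x j)) as [H|[j [Hj H]]].
    + rewrite H, Rmult_0_r. apply maxl_ge0.
    + rewrite H. rewrite <- Rmult_assoc.
      apply Rle_trans with (maxl n (fun k => A i k * B k j) * x j).
      * apply Rmult_le_compat_r; [apply Hx; auto|]. apply (maxl_ge n (fun k => A i k * B k j)); auto.
      * apply (maxl_ge n (fun j => maxl n (fun k => A i k * B k j) * x j)); auto.
Qed.

Lemma mvec_mid n x i : (i < n)%nat -> nnv n x -> mvec n mid x i = x i.
Proof.
  intros Hi Hx. unfold mvec, mid. apply Rle_antisym.
  - apply maxl_le; [apply Hx; auto|]. intros j Hj.
    destruct (Nat.eq_dec i j); [subst; lra|]. rewrite Rmult_0_l. apply Hx; auto.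
  - apply Rle_trans with ((if Nat.eq_dec i i then 1 else 0) * x i).
    + destruct (Nat.eq_dec i i); [lra|congruence].
    + apply (maxl_ge n (fun j => (if Nat.eq_dec i j then 1 else 0) * x j)); auto.
Qed.

Lemma conn n a x t i : (0 < n)%nat -> nnv n a -> nnv n x -> (i < n)%nat ->
  mvec n (mpow n (Circ n a) t) x i = Fv n a t x i.
Proof.
  intros Hn Ha Hx. revert i. induction t; intros i Hi.
  - simpl. rewrite mvec_mid, Fv_0; auto.
  - simpl. rewrite mvec_mmul; auto.
    + rewrite mvec_Circ, Fv_rec; auto. apply maxl_ext. intros s Hs.
      rewrite IHt; auto. apply mod_lt; auto.
    + intros k Hk. unfold Circ. apply Ha. apply mod_lt; auto.
Qed.

Lemma prodw_app a l1 l2 : prodw a (l1 ++ l2) = prodw a l1 * prodw a l2.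
Proof. induction l1; simpl; [ring|]. rewrite IHl1. ring. Qed.

Lemma suml_app l1 l2 : suml (l1 ++ l2) = (suml l1 + suml l2)%nat.
Proof. induction l1; simpl; auto. rewrite IHl1. lia. Qed.

Lemma prodw_repeat a s k : prodw a (repeat s k) = a s ^ k.
Proof. induction k; simpl; auto. rewrite IHk. ring. Qed.

Lemma suml_repeat s k : suml (repeat s k) = (k * s)%nat.
Proof. induction k; simpl; auto. Qed.

Lemma prodw_perm a l1 l2 : Permutation l1 l2 -> prodw a l1 = prodw a l2.
Proof. induction 1; simpl; auto; try congruence. ring. Qed.

Lemma suml_perm l1 l2 : Permutation l1 l2 -> suml l1 = suml l2.
Proof. induction 1; simpl; auto; try congruence. lia. Qed.

Lemma len_remove n l : length l = (count_occ Nat.eq_dec l n + length (remove Nat.eq_dec n l))%nat.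
Proof.
  induction l; simpl; auto. destruct (Nat.eq_dec n a); destruct (Nat.eq_dec a n); subst; simpl; try lia; congruence.
Qed.

Lemma count_remove n s l : s <> n -> count_occ Nat.eq_dec (remove Nat.eq_dec n l) s = count_occ Nat.eq_dec l s.
Proof.
  intros H. induction l; simpl; auto. destruct (Nat.eq_dec n a); subst.
  - destruct (Nat.eq_dec a s); [congruence|auto].
  - simpl. destruct (Nat.eq_dec a s); auto.
Qed.

Lemma pigeon n k : forall l, (forall x, In x l -> (x < n)%nat) ->
  (forall s, (s < n)%nat -> (count_occ Nat.eq_dec l s <= k)%nat) -> (length l <= n * k)%nat.
Proof.
  induction n; intros l Hl Hc.
  - destruct l; simpl; auto. specialize (Hl n (or_introl eq_refl)). lia.
  - rewrite (len_remove n l).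
    assert (H1 : (count_occ Nat.eq_dec l n <= k)%nat) by (apply Hc; lia).
    assert (H2 : (length (remove Nat.eq_dec n l) <= n * k)%nat).
    { apply IHn.
      - intros x Hx. apply in_remove in Hx. destruct Hx as [Hx1 Hx2]. specialize (Hl x Hx1). lia.
      - intros s Hs. rewrite count_remove by lia. apply Hc; lia. }
    simpl. lia.
Qed.

Lemma extract s : forall l k, (k <= count_occ Nat.eq_dec l s)%nat ->
  exists r, Permutation l (repeat s k ++ r).
Proof.
  induction l; intros k Hk; simpl in Hk.
  - exists []. assert (k = 0%nat) by lia. subst. simpl. auto.
  - destruct (Nat.eq_dec a s).
    + subst. destruct k.
      * exists (s :: l). simpl. auto.
      * destruct (IHl k) as [r Hr]; [lia|]. exists r. simpl. apply perm_skip. auto.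
    + destruct (IHl k Hk) as [r Hr]. exists (a :: r).
      apply Permutation_trans with (a :: repeat s k ++ r). apply perm_skip; auto.
      apply Permutation_middle.
Qed.

Lemma pow_le_compat x y k : 0 <= x -> x <= y -> x ^ k <= y ^ k.
Proof. intros. apply pow_incr; auto. Qed.

Definition shift (n c : nat) (x : nat -> R) : nat -> R := fun j => x ((j + c) mod n)%nat.

Lemma Qstep n a c L M x i : (0 < n)%nat -> nnv n a -> (forall s, (s < n)%nat -> a s <= L) ->
  (c < n)%nat -> a c = L -> (n * n <= M)%nat -> nnv n x -> (i < n)%nat ->
  Fv n a (S M) x i = L * Fv n a M (shift n c x) i.
Proof.
  intros Hn Ha HL Hc HaL HM Hx Hi.
  assert (HL0 : 0 <= L) by (rewrite <- HaL; apply Ha; auto).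
  apply Rle_antisym.
  - apply Fv_le; [apply Rmult_le_pos; auto; apply Fv_ge0|].
    intros l [Hlen Hl].
    assert (Hex : exists s, (s < n)%nat /\ (n <= count_occ Nat.eq_dec l s)%nat).
    { apply NNPP. intros Hne.
      assert (length l <= n * (n - 1))%nat.
      { apply pigeon; auto. intros s Hs. destruct (le_lt_dec n (count_occ Nat.eq_dec l s)); [|lia].
        exfalso; apply Hne; exists s; auto. }
      assert (n * (n - 1) < n * n)%nat by (apply Nat.mul_lt_mono_pos_l; lia). lia. }
    destruct Hex as [s [Hs Hcnt]].
    destruct (extract s l n Hcnt) as [r Hr].
    assert (Hrl : forall y, In y r -> In y l).
    { intros y Hy. apply Permutation_in with (repeat s n ++ r). apply Permutation_sym; auto.
      apply in_or_app; auto. }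
    assert (Hlenr : length l = (n + length r)%nat).
    { rewrite (Permutation_length Hr). rewrite length_app, repeat_length. auto. }
    set (l' := repeat c (n - 1) ++ r).
    assert (Hv : valid n M l').
    { split. unfold l'. rewrite length_app, repeat_length. lia.
      intros y Hy. unfold l' in Hy. apply in_app_or in Hy. destruct Hy as [Hy|Hy].
      apply repeat_spec in Hy. lia. apply Hl, Hrl; auto. }
    apply Rle_trans with (L * (prodw a l' * shift n c x ((i + suml l') mod n)%nat)).
    + rewrite (prodw_perm a _ _ Hr), (suml_perm _ _ Hr).
      unfold l', shift. rewrite !prodw_app, !suml_app, !prodw_repeat, !suml_repeat, HaL.
      assert (Hidx : ((i + (n * s + suml r)) mod n = ((i + ((n - 1) * c + suml r)) mod n + c) mod n)%nat).
      { rewrite Nat.Div0.add_mod_idemp_l. destruct n as [|n']; [lia|].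
        replace (i + (S n' * s + suml r))%nat with (i + suml r + s * S n')%nat by (simpl; ring).
        replace (i + ((S n' - 1) * c + suml r) + c)%nat with (i + suml r + c * S n')%nat.
        2:{ replace (S n' - 1)%nat with n' by lia. simpl. ring. }
        rewrite !Nat.Div0.mod_add. reflexivity. }
      rewrite Hidx.
      assert (Hr0 : 0 <= prodw a r) by (apply prodw_ge0 with n; auto; intros; apply Hl, Hrl; auto).
      assert (Hx0 : 0 <= x (((i + ((n - 1) * c + suml r)) mod n + c) mod n)%nat) by (apply Hx, mod_lt; auto).
      assert (Hpow : a s ^ n <= L ^ n) by (apply pow_le_compat; auto).
      assert (Hpow2 : L * L ^ (n - 1) = L ^ n).
      { destruct n; [lia|]. simpl. replace (n - 0)%nat with n by lia. reflexivity. }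
      rewrite <- (Rmult_assoc L), <- (Rmult_assoc L), Hpow2.
      apply Rmult_le_compat_r; auto. apply Rmult_le_compat_r; auto.
    + apply Rmult_le_compat_l; auto. apply Fv_ge; auto.
  - destruct (Fv_att n a M (shift n c x) i) as [H|[l [Hv H]]].
    + rewrite H, Rmult_0_r. apply Fv_ge0.
    + rewrite H. unfold shift. rewrite <- Rmult_assoc.
      replace (((i + suml l) mod n + c) mod n)%nat with ((i + suml (c :: l)) mod n)%nat.
      * rewrite <- HaL. apply (Fv_ge n a (S M) x i (c :: l)). destruct Hv as [H1 H2].
        split; simpl; [lia|]. intros y [<-|Hy]; auto.
      * rewrite Nat.Div0.add_mod_idemp_l. f_equal. simpl. lia.
Qed.

Lemma lmax_scale k l : 0 <= k -> lmax (map (Rmult k) l) = k * lmax l.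
Proof. intros Hk. induction l; simpl; [ring|]. fold (lmax (map (Rmult k) l)). fold (lmax l). rewrite IHl. apply RmaxRmult; auto. Qed.

Lemma maxl_scale n k f : 0 <= k -> maxl n (fun s => k * f s) = k * maxl n f.
Proof. intros Hk. unfold maxl. rewrite <- lmax_scale by auto. rewrite map_map. reflexivity. Qed.

Definition shk (n c k : nat) (x : nat -> R) : nat -> R := fun j => x ((j + k * c) mod n)%nat.

Lemma nonneg_shift n c x : (0 < n)%nat -> nnv n x -> nnv n (shift n c x).
Proof. intros Hn Hx j Hj. apply Hx, mod_lt; auto. Qed.

Lemma nonneg_shk n c k x : (0 < n)%nat -> nnv n x -> nnv n (shk n c k x).
Proof. intros Hn Hx j Hj. apply Hx, mod_lt; auto. Qed.

Lemma nonneg_Fv n a t x : nnv n (Fv n a t x).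
Proof. intros j _. apply Fv_ge0. Qed.

Section Crit.
Variables (n : nat) (a : nat -> R) (c : nat) (L : R).
Hypotheses (Hn : (0 < n)%nat) (Ha : nnv n a) (HL : forall s, (s < n)%nat -> a s <= L)
  (Hc : (c < n)%nat) (HaL : a c = L).

Lemma Qk : forall k M x i, (n * n <= M)%nat -> nnv n x -> (i < n)%nat ->
  Fv n a (M + k) x i = L ^ k * Fv n a M (shk n c k x) i.
Proof.
  induction k; intros M x i HM Hx Hi.
  - rewrite Nat.add_0_r, pow_O, Rmult_1_l. apply Fv_ext; auto. intros j Hj.
    unfold shk. rewrite Nat.mul_0_l, Nat.add_0_r, Nat.mod_small; auto.
  - replace (M + S k)%nat with (S (M + k)) by lia.
    rewrite (Qstep n a c L (M + k) x i); auto; [|lia].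
    rewrite IHk; auto; [|apply nonneg_shift; auto].
    rewrite <- tech_pow_Rmult, Rmult_assoc. f_equal. f_equal. apply Fv_ext; auto.
    intros j Hj. unfold shk, shift. rewrite mod_shift1. reflexivity.
Qed.

End Crit.

Definition AttAt (n : nat) (a : nat -> R) (L : R) (x : nat -> R) (t : nat) : Prop :=
  forall i, (i < n)%nat -> Fv n a (S t) x i = L * Fv n a t x i.

Lemma persist n a L x t : (0 < n)%nat -> nnv n a -> 0 <= L -> AttAt n a L x t -> AttAt n a L x (S t).
Proof.
  intros Hn Ha HL H i Hi. rewrite Fv_rec, (Fv_rec n a t) by auto.
  rewrite <- maxl_scale by auto. apply maxl_ext. intros s Hs.
  rewrite H by (apply mod_lt; auto). ring.
Qed.

Lemma persist_le n a L x t t' : (0 < n)%nat -> nnv n a -> 0 <= L -> (t <= t')%nat ->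
  AttAt n a L x t -> AttAt n a L x t'.
Proof.
  intros Hn Ha HL Ht H. induction Ht; auto. apply persist; auto.
Qed.

Lemma uniform n a c L x t : (0 < n)%nat -> nnv n a -> (forall s, (s < n)%nat -> a s <= L) ->
  (c < n)%nat -> a c = L -> 0 < L -> nnv n x -> AttAt n a L x t -> AttAt n a L x (n * n).
Proof.
  intros Hn Ha HL Hc HaL HL0 Hx H.
  assert (H' : AttAt n a L x (n * n + t * n)).
  { apply persist_le with t; auto; [lra|]. nia. }
  intros i Hi. specialize (H' i Hi).
  replace (S (n * n + t * n)) with (S (n * n) + t * n)%nat in H' by lia.
  rewrite (Qk n a c L Hn Ha HL Hc HaL (t * n) (S (n * n))) in H' by (auto; lia).
  rewrite (Qk n a c L Hn Ha HL Hc HaL (t * n) (n * n)) in H' by (auto; lia).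
  assert (E : forall M, Fv n a M (shk n c (t * n) x) i = Fv n a M x i).
  { intros M. apply Fv_ext; auto. intros j Hj. unfold shk.
    replace (t * n * c)%nat with ((t * c) * n)%nat by ring.
    rewrite Nat.Div0.mod_add, Nat.mod_small; auto. }
  rewrite !E in H'.
  assert (Hp : 0 < L ^ (t * n)) by (apply pow_lt; auto).
  apply Rmult_eq_reg_l with (L ^ (t * n)); [|lra]. rewrite H'. ring.
Qed.

Lemma semigroup n a s t z i : (0 < n)%nat -> nnv n a -> nnv n z -> (i < n)%nat ->
  Fv n a (s + t) z i = Fv n a s (Fv n a t z) i.
Proof.
  intros Hn Ha Hz. revert i. induction s; intros i Hi.
  - simpl. rewrite Fv_0; auto. apply Fv_ge0.
  - simpl. rewrite !Fv_rec by auto. apply maxl_ext. intros s' Hs'.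
    rewrite IHs; auto. apply mod_lt; auto.
Qed.

Lemma Fv_mono_vec n a t z z' i : nnv n a -> (0 < n)%nat -> (forall j, (j < n)%nat -> z j <= z' j) ->
  Fv n a t z i <= Fv n a t z' i.
Proof.
  intros Ha Hn H. apply Fv_le; [apply Fv_ge0|]. intros l Hv.
  apply Rle_trans with (prodw a l * z' ((i + suml l) mod n)%nat).
  - apply Rmult_le_compat_l. apply prodw_ge0 with n; auto. apply Hv. apply H, mod_lt; auto.
  - apply Fv_ge; auto.
Qed.

Lemma prodw_mono n a b l : nnv n a -> (forall s, (s < n)%nat -> a s <= b s) ->
  (forall s, In s l -> (s < n)%nat) -> prodw a l <= prodw b l.
Proof.
  intros Ha Hab Hl. induction l; simpl; [lra|].
  assert (Hs : (a0 < n)%nat) by (apply Hl; simpl; auto).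
  apply Rmult_le_compat; auto. apply prodw_ge0 with n; auto. intros; apply Hl; simpl; auto.
  apply IHl. intros; apply Hl; simpl; auto.
Qed.

Lemma Fv_mono_coef n a b t z i : nnv n a -> (0 < n)%nat -> (forall s, (s < n)%nat -> a s <= b s) ->
  nnv n z -> Fv n a t z i <= Fv n b t z i.
Proof.
  intros Ha Hn Hab Hz. apply Fv_le; [apply Fv_ge0|]. intros l Hv.
  apply Rle_trans with (prodw b l * z ((i + suml l) mod n)%nat).
  - apply Rmult_le_compat_r. apply Hz, mod_lt; auto. apply prodw_mono with n; auto. apply Hv.
  - apply Fv_ge; auto.
Qed.

Lemma Fv_scale_vec n a t z i k : 0 <= k -> Fv n a t (fun j => k * z j) i = k * Fv n a t z i.
Proof.
  intros Hk. unfold Fv. rewrite <- lmax_scale by auto. rewrite map_map. f_equal.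
  apply map_ext. intros l. ring.
Qed.

Lemma prodw_scale k a l : prodw (fun s => k * a s) l = k ^ length l * prodw a l.
Proof. induction l; simpl; [ring|]. rewrite IHl. ring. Qed.

Lemma Fv_scale_coef n a t z i k : 0 <= k -> Fv n (fun s => k * a s) t z i = k ^ t * Fv n a t z i.
Proof.
  intros Hk. unfold Fv. rewrite <- lmax_scale by (apply pow_le; auto). rewrite map_map. f_equal.
  apply map_ext_in. intros l Hl. apply idx_lists_iff in Hl. destruct Hl as [H1 _].
  rewrite prodw_scale, H1. ring.
Qed.

Lemma Fv_repeat n a c t z i : (c < n)%nat -> Fv n a t z i >= a c ^ t * z ((i + t * c) mod n)%nat.
Proof.
  intros Hc. apply Rle_ge. rewrite <- prodw_repeat, <- (suml_repeat c t).
  apply Fv_ge. split. apply repeat_length. intros s Hs. apply repeat_spec in Hs. lia.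
Qed.

Lemma mono_att n a b c L x t : (0 < n)%nat -> nnv n a -> (forall s, (s < n)%nat -> a s <= b s) ->
  (forall s, (s < n)%nat -> b s <= L) -> (c < n)%nat -> a c = L -> 0 < L -> nnv n x ->
  AttAt n a L x t -> AttAt n b L x ((n * n + t) + (n * n + t)).
Proof.
  intros Hn Ha Hab HbL Hc HaL HL Hx Ht.
  set (N := (n * n + t)%nat).
  assert (Hb : nnv n b) by (intros s Hs; apply Rle_trans with (a s); auto).
  assert (HaL' : forall s, (s < n)%nat -> a s <= L) by (intros s Hs; apply Rle_trans with (b s); auto).
  assert (HbcL : b c = L) by (apply Rle_antisym; auto; rewrite <- HaL; auto).
  assert (G : forall z i, nnv n z -> (i < n)%nat -> Fv n b (N + N) z i = Fv n b N (Fv n a N z) i).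
  { intros z i Hz Hi. apply Rle_antisym.
    - rewrite (Qk n b c L Hn Hb HbL Hc HbcL N N) by (auto; unfold N; lia).
      rewrite <- Fv_scale_vec by (apply pow_le; lra).
      apply Fv_mono_vec; auto. intros j Hj. unfold shk. rewrite <- HaL. apply Rge_le. apply Fv_repeat; auto.
    - rewrite semigroup by auto. apply Fv_mono_vec; auto. intros j Hj. apply Fv_mono_coef; auto. }
  intros i Hi.
  rewrite (Qstep n b c L (N + N) x i) by (auto; unfold N; lia).
  rewrite G by (auto; apply nonneg_shift; auto).
  rewrite (G x i) by auto. f_equal. apply Fv_ext; auto. intros j Hj.
  assert (HN : AttAt n a L x N) by (apply persist_le with t; auto; [lra|unfold N; lia]).
  specialize (HN j Hj).
  rewrite (Qstep n a c L N x j) in HN by (auto; unfold N; lia).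
  apply Rmult_eq_reg_l with L; lra.
Qed.

Lemma walkw_bounds n a M : (0 < n)%nat -> nnv n a -> (forall s, (s < n)%nat -> a s <= M) ->
  forall l i j, 0 <= walkw (Circ n a) i l j <= M ^ S (length l).
Proof.
  intros Hn Ha HM. induction l; intros i j; simpl.
  - unfold Circ. assert (H := mod_lt n (j + n - i) Hn). split; [apply Ha; auto|]. rewrite Rmult_1_r. apply HM; auto.
  - unfold Circ at 1. assert (H := mod_lt n (a0 + n - i) Hn). destruct (IHl a0 j) as [H1 H2].
    split. apply Rmult_le_pos; [apply Ha; auto|auto].
    apply Rmult_le_compat; [apply Ha; auto|auto|apply HM; auto|auto].
Qed.

Lemma kroot_le k w M : (1 <= k)%nat -> 0 <= M -> w <= M ^ k -> kroot k w <= M.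
Proof.
  intros Hk HM Hw. unfold kroot. destruct (Rle_dec w 0); auto.
  assert (HM0 : 0 < M).
  { destruct (Req_dec M 0) as [E|E]; [|lra]. subst. rewrite pow_i in Hw by lia. lra. }
  apply Rle_trans with (Rpower (M ^ k) (/ INR k)).
  - apply Rle_Rpower_l. apply Rlt_le, Rinv_0_lt_compat, lt_0_INR; lia. lra.
  - rewrite <- Rpower_pow by auto. rewrite Rpower_mult, Rinv_r, Rpower_1 by (auto; apply not_0_INR; lia). lra.
Qed.

Lemma kroot_pow k M : (1 <= k)%nat -> 0 < M -> kroot k (M ^ k) = M.
Proof.
  intros Hk HM. unfold kroot. destruct (Rle_dec (M ^ k) 0) as [H|H].
  - assert (0 < M ^ k) by (apply pow_lt; auto). lra.
  - rewrite <- Rpower_pow by auto. rewrite Rpower_mult, Rinv_r, Rpower_1 by (auto; apply not_0_INR; lia). auto.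
Qed.

Lemma NoDup_map_seq (g : nat -> nat) : forall len s,
  (forall i j, (s <= i < s + len)%nat -> (s <= j < s + len)%nat -> g i = g j -> i = j) ->
  NoDup (map g (seq s len)).
Proof.
  induction len; intros s H; simpl; constructor.
  - intros Hin. apply in_map_iff in Hin. destruct Hin as [j [Hj Hjin]]. apply in_seq in Hjin.
    assert (s = j) by (apply H; lia). lia.
  - apply IHlen. intros i j Hi Hj E. apply H; lia.
Qed.

Lemma walk_arith n a c : (0 < n)%nat -> (c < n)%nat -> forall len k,
  walkw (Circ n a) ((k * c) mod n)%nat (map (fun i => (i * c) mod n)%nat (seq (S k) len))
    (((S k + len) * c) mod n)%nat = a c ^ S len.
Proof.
  intros Hn Hc. assert (Hstep : forall k, Circ n a ((k * c) mod n)%nat ((S k * c) mod n)%nat = a c).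
  { intros k. unfold Circ. f_equal. apply Lsub; auto. apply mod_lt; auto.
    rewrite Nat.Div0.add_mod_idemp_l. f_equal. simpl. lia. }
  induction len; intros k.
  - cbn [seq map walkw]. rewrite Nat.add_0_r. rewrite Hstep. ring.
  - replace (seq (S k) (S len)) with (S k :: seq (S (S k)) len) by reflexivity. cbn [map walkw].
    rewrite Hstep. replace (S k + S len)%nat with (S (S k) + len)%nat by lia.
    rewrite IHlen. reflexivity.
Qed.

Lemma lambda_Circ n a : (0 < n)%nat -> nnv n a -> lambda n (Circ n a) = maxl n a.
Proof.
  intros Hn Ha. set (M := maxl n a).
  assert (HM : forall s, (s < n)%nat -> a s <= M) by (intros; apply maxl_ge; auto).
  assert (HM0 : 0 <= M) by apply maxl_ge0.
  apply Rle_antisym.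
  - apply lmax_le; auto. intros r Hr. apply in_map_iff in Hr. destruct Hr as [cl [<- _]].
    destruct cl as [|i0 rest]; simpl; auto.
    destruct (NoDup_dec Nat.eq_dec (i0 :: rest)); auto.
    apply kroot_le; simpl; auto; [lia|]. apply (walkw_bounds n a M Hn Ha HM rest i0 i0).
  - destruct (maxl_att n a) as [H|[c [Hc H]]].
    + fold M in H. rewrite H. apply lmax_ge0.
    + fold M in H. destruct (Req_dec M 0) as [E|E]; [rewrite E; apply lmax_ge0|].
      assert (HMp : 0 < M) by lra.
      set (P := fun m => (1 <= m)%nat /\ ((m * c) mod n = 0)%nat).
      assert (Hex : exists m, P m /\ forall k, P k -> (m <= k)%nat).
      { destruct (dec_inh_nat_subset_has_unique_least_element P) as [m [[Hm1 Hm2] _]].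
        - intros k. apply classic.
        - exists n. split; [lia|]. rewrite Nat.mul_comm; apply Nat.Div0.mod_mul.
        - exists m; auto. }
      destruct Hex as [m [[Hm1 Hm2] Hmin]].
      assert (Hmn : (m <= n)%nat) by (apply Hmin; split; [lia|rewrite Nat.mul_comm; apply Nat.Div0.mod_mul]).
      set (g := fun i => ((i * c) mod n)%nat).
      set (rest := map g (seq 1 (m - 1))).
      assert (Hcyc : map g (seq 0 m) = 0%nat :: rest).
      { unfold rest. destruct m; [lia|]. simpl. replace (m - 0)%nat with m by lia. f_equal. unfold g. simpl. apply Nat.Div0.mod_0_l. }
      assert (Hin : In (0%nat :: rest) (flat_map (fun k => idx_lists n k) (seq 1 n))).
      { apply in_flat_map. exists m. split. apply in_seq; lia.
        rewrite <- Hcyc. apply idx_lists_iff. split. rewrite length_map, length_seq; auto.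
        intros s Hs. apply in_map_iff in Hs. destruct Hs as [i [<- _]]. apply mod_lt; auto. }
      assert (Hnd : NoDup (0%nat :: rest)).
      { rewrite <- Hcyc. apply NoDup_map_seq. intros i j Hi Hj E0. unfold g in E0.
        destruct (Nat.lt_total i j) as [Hij|[Hij|Hij]]; auto; exfalso.
        - assert (P (j - i)%nat).
          { split; [lia|]. apply mod_zero_diff with (i * c)%nat; auto.
            replace (i * c + (j - i) * c)%nat with (j * c)%nat by nia. auto. }
          specialize (Hmin _ H0). lia.
        - assert (P (i - j)%nat).
          { split; [lia|]. apply mod_zero_diff with (j * c)%nat; auto.
            replace (j * c + (i - j) * c)%nat with (i * c)%nat by nia. auto. }
          specialize (Hmin _ H0). lia. }
      apply Rle_trans with (cycle_gmean (Circ n a) (0%nat :: rest)).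
      * unfold cycle_gmean. destruct (NoDup_dec Nat.eq_dec (0%nat :: rest)) as [_|F]; [|contradiction].
        assert (Hw : walkw (Circ n a) 0 rest 0 = M ^ m).
        { pose proof (walk_arith n a c Hn Hc (m - 1) 0) as W.
          replace (S 0 + (m - 1))%nat with m in W by lia. rewrite Hm2 in W.
          simpl in W. rewrite Nat.Div0.mod_0_l in W. unfold rest, g. rewrite W.
          rewrite <- H. destruct m; [lia|]. simpl. replace (m - 0)%nat with m by lia. reflexivity. }
        rewrite Hw. replace (length (0%nat :: rest)) with m.
        rewrite kroot_pow; auto. lra.
        unfold rest. simpl. rewrite length_map, length_seq. lia.
      * apply lmax_In. apply in_map. auto.
Qed.

Lemma Attr_iff n a x : (0 < n)%nat -> nnv n a ->
  (Attr n (Circ n a) x <-> nnv n x /\ exists t, AttAt n a (maxl n a) x t).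
Proof.
  intros Hn Ha. unfold Attr. split.
  - intros [Hx [t Ht]]. split; auto. exists t. intros i Hi.
    rewrite <- !conn by auto. rewrite <- lambda_Circ by auto. apply Ht; auto.
  - intros [Hx [t Ht]]. split; auto. exists t. intros i Hi.
    rewrite !conn by auto. rewrite lambda_Circ by auto. apply Ht; auto.
Qed.

Lemma att_zero n a x : (0 < n)%nat -> nnv n a -> maxl n a = 0 -> AttAt n a 0 x 0.
Proof.
  intros Hn Ha H0 i Hi. rewrite Rmult_0_l, Fv_rec by auto.
  apply Rle_antisym; [|apply maxl_ge0]. apply maxl_le; [lra|]. intros s Hs.
  assert (a s = 0) by (apply Rle_antisym; [rewrite <- H0; apply maxl_ge; auto|apply Ha; auto]).
  rewrite H, Rmult_0_l. lra.
Qed.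

Definition form (n : nat) (f x : nat -> R) : R := maxl n (fun u => f u * x u).
Definition ev (u : nat) : nat -> R := fun j => if Nat.eq_dec j u then 1 else 0.

Lemma Fv_rep n a t z i : (0 < n)%nat -> nnv n a -> nnv n z ->
  Fv n a t z i = form n (fun u => Fv n a t (ev u) i) z.
Proof.
  intros Hn Ha Hz. unfold form. apply Rle_antisym.
  - apply Fv_le; [apply maxl_ge0|]. intros l Hv.
    set (u := ((i + suml l) mod n)%nat).
    assert (Hu : (u < n)%nat) by (apply mod_lt; auto).
    apply Rle_trans with (Fv n a t (ev u) i * z u).
    + apply Rmult_le_compat_r; [apply Hz; auto|].
      replace (prodw a l) with (prodw a l * ev u ((i + suml l) mod n)%nat).
      apply Fv_ge; auto. unfold ev. fold u. destruct (Nat.eq_dec u u); [ring|congruence].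
    + apply (maxl_ge n (fun u => Fv n a t (ev u) i * z u)); auto.
  - apply maxl_le; [apply Fv_ge0|]. intros u Hu.
    destruct (Fv_att n a t (ev u) i) as [H|[l [Hv H]]].
    + rewrite H, Rmult_0_l. apply Fv_ge0.
    + rewrite H. unfold ev. destruct (Nat.eq_dec ((i + suml l) mod n)%nat u) as [E|E].
      * rewrite Rmult_1_r, <- E. apply Fv_ge; auto.
      * rewrite Rmult_0_r, Rmult_0_l. apply Fv_ge0.
Qed.

Definition cr (lo hi : nat -> R) (k : nat) : nat -> R := fun u => if Nat.eq_dec u k then hi u else lo u.

Section Corner.
Variables (n : nat) (lo hi : nat -> R).
Hypotheses (Hn : (0 < n)%nat) (Hlh : forall u, (u < n)%nat -> 0 <= lo u <= hi u).

Lemma form_mono f x y : nnv n f -> (forall u, (u < n)%nat -> x u <= y u) -> form n f x <= form n f y.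
Proof. intros Hf H. apply maxl_mono. intros k Hk. apply Rmult_le_compat_l; auto. Qed.

Lemma cr_bound f u : nnv n f -> (u < n)%nat -> form n f (cr lo hi u) <= Rmax (form n f lo) (f u * hi u).
Proof.
  intros Hf Hu. apply maxl_le. apply Rle_trans with (form n f lo); [apply maxl_ge0|apply Rmax_l].
  intros v Hv. unfold cr. destruct (Nat.eq_dec v u).
  - subst. apply Rmax_r.
  - apply Rle_trans with (form n f lo); [|apply Rmax_l]. apply (maxl_ge n (fun v => f v * lo v)); auto.
Qed.

Lemma cr_ge f u : (u < n)%nat -> f u * hi u <= form n f (cr lo hi u).
Proof.
  intros Hu. apply Rle_trans with (f u * cr lo hi u u).
  - unfold cr. destruct (Nat.eq_dec u u); [lra|congruence].
  - apply (maxl_ge n (fun v => f v * cr lo hi u v)); auto.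
Qed.

Lemma lo_half f g : nnv n f -> nnv n g ->
  (forall k, (k < n)%nat -> form n f (cr lo hi k) = form n g (cr lo hi k)) ->
  ~ (form n g lo < form n f lo).
Proof.
  intros Hf Hg Hc Hlt. destruct (maxl_att n (fun u => f u * lo u)) as [H|[u [Hu H]]].
  - fold (form n f lo) in H. pose proof (maxl_ge0 n (fun u => g u * lo u)). fold (form n g lo) in H0. lra.
  - fold (form n f lo) in H.
    pose proof (cr_ge f u Hu) as A1. pose proof (cr_bound g u Hg Hu) as A2.
    pose proof (cr_bound f u Hf Hu) as A3. pose proof (cr_ge g u Hu) as A4.
    specialize (Hc u Hu).
    assert (Hfu : 0 <= f u) by auto. assert (Hgu : 0 <= g u) by auto.
    destruct (Hlh u Hu) as [Hl0 Hlh'].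
    assert (B : f u * lo u <= f u * hi u) by (apply Rmult_le_compat_l; auto).
    assert (G0 : 0 <= form n g lo) by apply maxl_ge0.
    assert (A3' : form n f (cr lo hi u) <= f u * hi u).
    { apply Rle_trans with (1 := A3). apply Rmax_lub; lra. }
    assert (A2' : f u * hi u <= g u * hi u).
    { assert (Hx : form n g lo < form n g (cr lo hi u)) by lra.
      unfold Rmax in A2. destruct (Rle_dec (form n g lo) (g u * hi u)); lra. }
    assert (E : g u * hi u = f u * hi u) by lra.
    assert (Hhi : hi u <> 0).
    { intros Z. assert (f u * hi u = 0) by (rewrite Z; ring). lra. }
    apply Rmult_eq_reg_r in E; auto.
    assert (C : g u * lo u <= form n g lo) by (apply (maxl_ge n (fun v => g v * lo v)); auto).
    rewrite E in C. lra.
Qed.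

Lemma box_half f g x : nnv n f -> nnv n g ->
  (forall k, (k < n)%nat -> form n f (cr lo hi k) = form n g (cr lo hi k)) ->
  form n f lo = form n g lo ->
  (forall u, (u < n)%nat -> lo u <= x u <= hi u) -> form n f x <= form n g x.
Proof.
  intros Hf Hg Hc Hlo Hx. apply maxl_le; [apply maxl_ge0|]. intros u Hu.
  destruct (Rle_dec (f u * x u) (form n f lo)) as [Hle|Hgt].
  - apply Rle_trans with (1 := Hle). rewrite Hlo. apply form_mono; auto. intros v Hv. apply Hx; auto.
  - apply Rnot_le_lt in Hgt.
    assert (F0 : 0 <= form n f lo) by apply maxl_ge0.
    destruct (Hx u Hu) as [Hx1 Hx2].
    assert (Hfu : 0 <= f u) by auto.
    assert (Hxu : 0 < x u).
    { destruct (Rle_lt_dec (x u) 0); auto. assert (x u = 0) by (destruct (Hlh u Hu); lra).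
      rewrite H, Rmult_0_r in Hgt. lra. }
    assert (Hhu : 0 < hi u) by lra.
    set (b := x u / hi u).
    assert (Hb0 : 0 <= b) by (unfold b; apply Rlt_le, Rdiv_lt_0_compat; auto).
    assert (Hb1 : b <= 1) by (unfold b; apply Rmult_le_reg_r with (hi u); auto; unfold Rdiv; rewrite Rmult_assoc, Rinv_l; lra).
    assert (Hbx : b * hi u = x u) by (unfold b; field; lra).
    assert (S1 : b * form n g (cr lo hi u) <= form n g x).
    { unfold form. rewrite <- maxl_scale by auto. apply maxl_mono. intros v Hv. unfold cr.
      destruct (Nat.eq_dec v u).
      - subst. rewrite <- Hbx. lra.
      - destruct (Hlh v Hv) as [Hl0 _]. destruct (Hx v Hv) as [Hxv _].
        assert (0 <= g v) by auto.
        apply Rle_trans with (g v * lo v).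
        + assert (0 <= g v * lo v) by (apply Rmult_le_pos; auto). nra.
        + apply Rmult_le_compat_l; auto. }
    assert (S2 : f u * hi u <= form n g (cr lo hi u)) by (rewrite <- Hc; auto; apply cr_ge; auto).
    apply Rle_trans with (b * (f u * hi u)).
    + rewrite <- Hbx. lra.
    + apply Rle_trans with (2 := S1). apply Rmult_le_compat_l; auto.
Qed.

Lemma corner f g x : nnv n f -> nnv n g ->
  (forall k, (k < n)%nat -> form n f (cr lo hi k) = form n g (cr lo hi k)) ->
  (forall u, (u < n)%nat -> lo u <= x u <= hi u) -> form n f x = form n g x.
Proof.
  intros Hf Hg Hc Hx.
  assert (Hlo : form n f lo = form n g lo).
  { apply Rle_antisym; apply Rnot_lt_le; [apply lo_half|apply lo_half]; auto.
    intros; symmetry; auto. }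
  apply Rle_antisym; apply box_half; auto. intros; symmetry; auto.
Qed.
End Corner.

Definition near_lo (I : ival) (e : R) : R :=
  if lo_closed I then lo I else Rmin (lo I + e) ((lo I + hi I) / 2).
Definition near_hi (I : ival) (e : R) : R :=
  if hi_closed I then hi I else Rmax (hi I - e) ((lo I + hi I) / 2).

Lemma near_lo_ok I e : wf_ival I -> 0 < e -> in_ival I (near_lo I e) /\ lo I <= near_lo I e <= lo I + e.
Proof.
  intros [H0 [H1 [v [Hv1 Hv2]]]] He. unfold near_lo, in_ival in *.
  destruct (lo_closed I), (hi_closed I); unfold Rmin; try destruct (Rle_dec _ _); repeat split; lra.
Qed.

Lemma near_hi_ok I e : wf_ival I -> 0 < e -> in_ival I (near_hi I e) /\ hi I - e <= near_hi I e <= hi I.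
Proof.
  intros [H0 [H1 [v [Hv1 Hv2]]]] He. unfold near_hi, in_ival in *.
  destruct (lo_closed I), (hi_closed I); unfold Rmax; try destruct (Rle_dec _ _); repeat split; lra.
Qed.

Lemma Fv_lip n a L t y z i e : (0 < n)%nat -> nnv n a -> (forall s, (s < n)%nat -> a s <= L) -> 0 <= e ->
  (forall j, (j < n)%nat -> y j <= z j + e) -> Fv n a t y i <= Fv n a t z i + L ^ t * e.
Proof.
  intros Hn Ha HL He H.
  assert (HL0 : 0 <= L) by (apply Rle_trans with (a 0%nat); [apply Ha; auto|apply HL; auto]).
  apply Fv_le. apply Rplus_le_le_0_compat; [apply Fv_ge0|apply Rmult_le_pos; auto; apply pow_le; auto].
  intros l [Hlen Hl].
  assert (P0 : 0 <= prodw a l) by (apply prodw_ge0 with n; auto).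
  assert (P1 : prodw a l <= L ^ t) by (rewrite <- Hlen; apply prodw_le with n; auto).
  assert (T : prodw a l * z ((i + suml l) mod n)%nat <= Fv n a t z i) by (apply Fv_ge; split; auto).
  specialize (H ((i + suml l) mod n)%nat (mod_lt n _ Hn)).
  apply Rle_trans with (prodw a l * (z ((i + suml l) mod n)%nat + e)).
  - apply Rmult_le_compat_l; auto.
  - rewrite Rmult_plus_distr_l. apply Rplus_le_compat; auto. apply Rmult_le_compat_r; auto.
Qed.

Lemma eps_eq d1 d2 K : 0 <= K -> (forall e, 0 < e -> d1 <= d2 + K * e /\ d2 <= d1 + K * e) -> d1 = d2.
Proof.
  intros HK H. destruct (Rtotal_order d1 d2) as [Hl|[Hq|Hg]]; auto; exfalso.
  - set (e := (d2 - d1) / (2 * (K + 1))).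
    assert (He : 0 < e) by (unfold e; apply Rdiv_lt_0_compat; lra).
    assert (E : (K + 1) * e = (d2 - d1) / 2) by (unfold e; field; lra).
    destruct (H e He) as [_ H2]. nra.
  - set (e := (d1 - d2) / (2 * (K + 1))).
    assert (He : 0 < e) by (unfold e; apply Rdiv_lt_0_compat; lra).
    assert (E : (K + 1) * e = (d1 - d2) / 2) by (unfold e; field; lra).
    destruct (H e He) as [H1 _]. nra.
Qed.

Lemma AttAt_scale n a L z t k : 0 < k ->
  (AttAt n (fun s => k * a s) (k * L) z t <-> AttAt n a L z t).
Proof.
  intros Hk. unfold AttAt. assert (Hp : 0 < k ^ t) by (apply pow_lt; auto).
  split; intros H i Hi; specialize (H i Hi); rewrite !Fv_scale_coef in * by lra; simpl in *.
  - apply Rmult_eq_reg_l with (k * k ^ t); [|nra]. rewrite H. ring.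
  - rewrite H. ring.
Qed.

Lemma AttAt_form n a L z N i : (0 < n)%nat -> nnv n a -> nnv n z -> 0 <= L ->
  (Fv n a (S N) z i = L * Fv n a N z i <->
   form n (fun u => Fv n a (S N) (ev u) i) z = form n (fun u => L * Fv n a N (ev u) i) z).
Proof.
  intros Hn Ha Hz HL. rewrite !(Fv_rep n a _ z i) by auto.
  unfold form. rewrite <- maxl_scale by auto.
  replace (maxl n (fun s => L * (Fv n a N (ev s) i * z s))) with
    (maxl n (fun u => L * Fv n a N (ev u) i * z u)) by (apply maxl_ext; intros; ring).
  tauto.
Qed.

Theorem theorem4 (n : nat) (X ia : nat -> ival)
  (HX : forall i, (i < n)%nat -> wf_ival (X i))
  (Ha : forall t, (t < n)%nat -> wf_ival (ia t))
  (Hhat : forall t, (t < n)%nat -> in_ival (ia t) (hat_a n ia t)) :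
  possibly_robust n ia X <->
  (forall k, (k < n)%nat -> Attr n (hatA n ia) (xk X k)).
Proof.
  destruct (Nat.eq_dec n 0) as [Hn0|Hn0].
  { subst n. split.
    - intros _ k Hk. lia.
    - intros _. exists (fun _ => 0). split; [intros; lia|]. intros x _. split; [intros; lia|].
      exists 0%nat. intros; lia. }
  assert (Hn : (0 < n)%nat) by lia.
  set (mu := lo_max n ia).
  set (hat := hat_a n ia).
  assert (EhA : hatA n ia = Circ n hat) by reflexivity.
  rewrite EhA.
  assert (Hlh : forall t, (t < n)%nat -> 0 <= lo (ia t) <= hi (ia t)).
  { intros t Ht. destruct (Ha t Ht) as [H1 [H2 _]]. lra. }
  assert (Hmu0 : 0 <= mu) by apply maxl_ge0.
  assert (Hhat_nn : nnv n hat).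
  { intros s Hs. unfold hat, hat_a. fold mu. apply Rmin_glb; auto. destruct (Hlh s Hs); lra. }
  assert (Hhat_le : forall s, (s < n)%nat -> hat s <= mu).
  { intros s Hs. unfold hat, hat_a. fold mu. apply Rmin_l. }
  assert (Hhat_max : maxl n hat = mu).
  { apply Rle_antisym. apply maxl_le; auto.
    destruct (maxl_att n (fun k => lo (ia k))) as [H|[k [Hk H]]].
    - fold (lo_max n ia) in H. fold mu in H. rewrite H. apply maxl_ge0.
    - fold (lo_max n ia) in H. fold mu in H. apply Rle_trans with (hat k); [|apply maxl_ge; auto].
      unfold hat, hat_a. fold mu. destruct (Hlh k Hk). unfold Rmin. destruct (Rle_dec mu (hi (ia k))); lra. }
  assert (HXlh : forall j, (j < n)%nat -> 0 <= lo (X j) <= hi (X j)).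
  { intros j Hj. destruct (HX j Hj) as [H1 [H2 _]]. lra. }
  assert (Hxk_nn : forall k, nnv n (xk X k)).
  { intros k j Hj. unfold xk. destruct (Nat.eq_dec j k); destruct (HXlh j Hj); lra. }
  assert (HXbox : forall x, (forall j, (j < n)%nat -> in_ival (X j) (x j)) ->
            forall j, (j < n)%nat -> lo (X j) <= x j <= hi (X j)).
  { intros x Hx j Hj. specialize (Hx j Hj). unfold in_ival in Hx.
    destruct (lo_closed (X j)), (hi_closed (X j)); lra. }
  assert (HXnn : forall x, (forall j, (j < n)%nat -> in_ival (X j) (x j)) -> nnv n x).
  { intros x Hx j Hj. destruct (HXbox x Hx j Hj). destruct (HXlh j Hj). lra. }
  destruct (Req_dec mu 0) as [Hmz|Hmz].
  {
    assert (Hz : forall z, nnv n z -> Attr n (Circ n hat) z).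
    { intros z Hz. apply Attr_iff; auto. split; auto. exists 0%nat. rewrite Hhat_max, Hmz.
      apply att_zero; auto. rewrite Hhat_max; auto. }
    split.
    - intros _ k Hk. apply Hz; auto.
    - intros _. exists hat. split; [auto|]. intros x Hx. apply Hz. apply HXnn; auto. }
  assert (Hmup : 0 < mu) by lra.
  destruct (maxl_att n (fun k => lo (ia k))) as [H|[ks [Hks Hmuks]]].
  { fold (lo_max n ia) in H. fold mu in H. lra. }
  fold (lo_max n ia) in Hmuks. fold mu in Hmuks.
  assert (Hhks : hat ks = mu).
  { unfold hat, hat_a. fold mu. destruct (Hlh ks Hks). unfold Rmin. destruct (Rle_dec mu (hi (ia ks))); lra. }
  set (N := (n * n)%nat).
  split.
  -
    intros [a [Hain Hrob]] k Hk.
    assert (Han : nnv n a).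
    { intros s Hs. specialize (Hain s Hs). destruct (Hlh s Hs). unfold in_ival in Hain.
      destruct (lo_closed (ia s)), (hi_closed (ia s)); lra. }
    assert (Hahi : forall s, (s < n)%nat -> lo (ia s) <= a s <= hi (ia s)).
    { intros s Hs. specialize (Hain s Hs). unfold in_ival in Hain.
      destruct (lo_closed (ia s)), (hi_closed (ia s)); lra. }
    set (L := maxl n a).
    assert (HaL : forall s, (s < n)%nat -> a s <= L) by (intros; apply maxl_ge; auto).
    assert (HmuL : mu <= L).
    { rewrite Hmuks. apply Rle_trans with (a ks); [apply Hahi; auto|apply HaL; auto]. }
    assert (HLp : 0 < L) by lra.
    destruct (maxl_att n a) as [H|[c [Hc HLc]]]; [fold L in H; lra|]. fold L in HLc.
    assert (HattX : forall x, (forall j, (j < n)%nat -> in_ival (X j) (x j)) -> AttAt n a L x N).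
    { intros x Hx. destruct (proj1 (Attr_iff n a x Hn Han) (Hrob x Hx)) as [Hxn [t Ht]].
      apply uniform with c t; auto. }
    set (z := xk X k).
    assert (Hzatt : AttAt n a L z N).
    { intros i Hi.
      set (K := L * L ^ N + L ^ S N).
      assert (HK : 0 <= K) by (unfold K; assert (0 < L ^ N) by (apply pow_lt; auto);
                                assert (0 < L ^ S N) by (apply pow_lt; auto); nra).
      apply eps_eq with K; auto. intros e He.
      set (y := fun j => if Nat.eq_dec j k then near_hi (X j) e else near_lo (X j) e).
      assert (Hy : forall j, (j < n)%nat -> in_ival (X j) (y j)).
      { intros j Hj. unfold y. destruct (Nat.eq_dec j k).
        - apply near_hi_ok; auto. - apply near_lo_ok; auto. }
      assert (Hyz1 : forall j, (j < n)%nat -> y j <= z j + e).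
      { intros j Hj. unfold y, z, xk. destruct (Nat.eq_dec j k).
        - destruct (near_hi_ok (X j) e (HX j Hj) He); lra.
        - destruct (near_lo_ok (X j) e (HX j Hj) He); lra. }
      assert (Hyz2 : forall j, (j < n)%nat -> z j <= y j + e).
      { intros j Hj. unfold y, z, xk. destruct (Nat.eq_dec j k).
        - destruct (near_hi_ok (X j) e (HX j Hj) He); lra.
        - destruct (near_lo_ok (X j) e (HX j Hj) He); lra. }
      pose proof (HattX y Hy i Hi) as Ey.
      pose proof (Fv_lip n a L (S N) y z i e Hn Han HaL (Rlt_le _ _ He) Hyz1) as L1.
      pose proof (Fv_lip n a L (S N) z y i e Hn Han HaL (Rlt_le _ _ He) Hyz2) as L2.
      pose proof (Fv_lip n a L N y z i e Hn Han HaL (Rlt_le _ _ He) Hyz1) as L3.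
      pose proof (Fv_lip n a L N z y i e Hn Han HaL (Rlt_le _ _ He) Hyz2) as L4.
      unfold K. split.
      + rewrite Ey in L2. assert (L * Fv n a N y i <= L * (Fv n a N z i + L ^ N * e))
          by (apply Rmult_le_compat_l; lra). nra.
      + rewrite Ey in L1. assert (L * Fv n a N z i <= L * (Fv n a N y i + L ^ N * e))
          by (apply Rmult_le_compat_l; lra). nra. }
    assert (Hzn : nnv n z) by apply Hxk_nn.
    assert (Hz' : AttAt n (fun s => mu * a s) (mu * L) z N) by (apply AttAt_scale; auto).
    assert (Hmono : AttAt n (fun s => L * hat s) (mu * L) z ((n * n + N) + (n * n + N))).
    { apply mono_att with (fun s => mu * a s) c; auto.
      - intros s Hs. specialize (Han s Hs). nra.
      - intros s Hs. specialize (Han s Hs). specialize (HaL s Hs). destruct (Hahi s Hs).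
        unfold hat, hat_a. fold mu. unfold Rmin. destruct (Rle_dec mu (hi (ia s))); nra.
      - intros s Hs. specialize (Hhat_le s Hs). specialize (Hhat_nn s Hs). nra.
      - rewrite HLc. ring.
      - nra. }
    rewrite Rmult_comm in Hmono. apply AttAt_scale in Hmono; auto.
    apply Attr_iff; auto. split; auto. exists ((n * n + N) + (n * n + N))%nat. rewrite Hhat_max. auto.
  -
    intros Hc. exists hat. split; auto.
    assert (Hcorner : forall k, (k < n)%nat -> AttAt n hat mu (xk X k) N).
    { intros k Hk. destruct (proj1 (Attr_iff n hat (xk X k) Hn Hhat_nn) (Hc k Hk)) as [_ [t Ht]].
      rewrite Hhat_max in Ht. apply uniform with ks t; auto. }
    intros x Hx. apply Attr_iff; auto. split; [apply HXnn; auto|]. exists N. rewrite Hhat_max.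
    intros i Hi. apply AttAt_form; [auto|auto|apply HXnn; auto|lra|].
    apply (corner n (fun j => lo (X j)) (fun j => hi (X j))); auto.
    + intros u Hu. apply Fv_ge0.
    + intros u Hu. apply Rmult_le_pos; [lra|apply Fv_ge0].
    + intros k Hk. apply AttAt_form; [auto|auto|apply Hxk_nn|lra|]. apply Hcorner; auto.
Qed.
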